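(* $AQ_4$ is fractional strongly maximally matched and fractional strongly super matched; that is, $fsmp(AQ_4)=7$, and for every set $F\subseteq V(AQ_4)\cup E(AQ_4)$ with $|F|=7$ such that $AQ_4-F$ has no fractional perfect matching, the graph $AQ_4-F$ has an isolated vertex.
   Context: The $n$-dimensional augmented cube $AQ_n$ ($n\geq 1$) has vertex set all binary strings $u_1u_2\cdots u_n$. $AQ_1\cong K_2$ on vertices $0,1$. For $n\geq 2$, $AQ_n$ consists of a copy $AQ^0_{n-1}$ of $AQ_{n-1}$ with $0$ prefixed to every label and a copy $AQ^1_{n-1}$ with $1$ prefixed, plus the following edges: $0u_1\cdots u_{n-1}$ is adjacent to $1v_1\cdots v_{n-1}$ iff either $u_i=v_i$ for all $i$ (cross edge) or $u_i\neq v_i$ for all $i$ (complement edge). $AQ_4$ is $7$-regular on $16$ vertices. For $F\subseteq V(G)\cup E(G)$, $G-F$ denotes $G$ with the vertices and edges of $F$ deleted. A fractional perfect matching of $G$ is $f:E(G)\to[0,1]$ with $\sum_{e\ni v}f(e)=1$ for every vertex $v$. A fractional strong matching preclusion (FSMP) set is $F\subseteq V(G)\cup E(G)$ with $G-F$ having no fractional perfect matching; $fsmp(G)$ is the minimum size of an FSMP set, and an FSMP set of that size is optimal. $G$ is fractional strongly maximally matched if $fsmp(G)=\delta(G)$, and fractional strongly super matched if in addition $G-F$ has an isolated vertex for every optimal FSMP set $F$. *)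

(* Defs.v *)
From HB Require Import structures.
From mathcomp Require Import all_boot all_order all_algebra.
Set Implicit Arguments. Unset Strict Implicit. Unset Printing Implicit Defensive.
Import Order.TTheory GRing.Theory Num.Theory.

Section Graphs.
Variable T : finType.
Variable e : rel T.   (* adjacency (symmetric, irreflexive) *)

Definition edges : {set {set T}} :=
  [set A : {set T} | [exists u, exists v, (A == [set u; v]) && e u v]].

(* A set F ⊆ V(G) ∪ E(G) is given as a pair (FV, FE), FV ⊆ V, FE ⊆ E. *)
Definition valid_fault (FV : {set T}) (FE : {set {set T}}) : bool :=
  FE \subset edges.
Definition fault_size (FV : {set T}) (FE : {set {set T}}) : nat :=
  #|FV| + #|FE|.

Definition rem_vertices (FV : {set T}) : {set T} := ~: FV.
Definition rem_edges (FV : {set T}) (FE : {set {set T}}) : {set {set T}} :=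
  [set A in edges | (A \notin FE) && [disjoint A & FV]].

Definition has_fpm (R : realFieldType) (V : {set T}) (E : {set {set T}}) : Prop :=
  exists f : {set T} -> R,
    (forall A, A \in E -> 0 <= f A <= 1)%R /\
    (forall v, v \in V -> (\sum_(A in E | v \in A) f A = 1)%R).

Definition is_fsmp_set (R : realFieldType) FV FE : Prop :=
  valid_fault FV FE /\ ~ has_fpm R (rem_vertices FV) (rem_edges FV FE).

Definition fsmp_is (R : realFieldType) (k : nat) : Prop :=
  (exists FV FE, is_fsmp_set R FV FE /\ fault_size FV FE = k) /\
  (forall FV FE, is_fsmp_set R FV FE -> k <= fault_size FV FE).

Definition has_isolated FV FE : Prop :=
  exists v, v \in rem_vertices FV /\
    forall A, A \in rem_edges FV FE -> v \notin A.

End Graphs.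

(* Adjacency of AQ_n on binary strings u_1...u_n (head = prefixed bit u_1).  Base: the single vertex of length 0 has no
   edges, so that AQ_1 = K_2 is recovered. *)
Fixpoint aq_adj (u v : seq bool) : bool :=
  match u, v with
  | a :: u', b :: v' =>
      if a == b then aq_adj u' v' else (u' == v') || (u' == map negb v')
  | _, _ => false
  end.

Definition AQ (n : nat) : rel (n.-tuple bool) :=
  fun u v => aq_adj (val u) (val v).

(* Main.v *)
Require Import Defs.
From HB Require Import structures.
From mathcomp Require Import all_boot all_order all_algebra.
From mathcomp Require Import zify.
Set Implicit Arguments. Unset Strict Implicit. Unset Printing Implicit Defensive.

Notation T := (4.-tuple bool).
Notation G := (@AQ 4).

Definition enc (t : T) : nat := foldl (fun acc (b:bool) => acc.*2 + b) 0 (val t).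
Definition mk (i : nat) : T :=
  @Tuple 4 bool [:: odd i./2./2./2; odd i./2./2; odd i./2; odd i] isT.
Definition vs : seq T := [seq mk i | i <- iota 0 16].

Arguments vs : simpl never.
Arguments enc : simpl never.
Arguments mk : simpl never.
Arguments AQ : simpl never.

Lemma vs_cover (t : T) : t \in vs.
Proof.
case: t => [[|a [|b [|c [|d [|]]]]]] // H; move: H.
by case: a; case: b; case: c; case: d => H; vm_compute.
Qed.

Lemma vs_uniq : uniq vs. Proof. by vm_compute. Qed.

Lemma card_perm (T0 : finType) (s : seq T0) :
  uniq s -> (forall x, x \in s) -> forall (A : {set T0}), #|A| = count (mem A) s.
Proof.
move=> Us Cs A; rewrite cardE /enum_mem size_filter.
have Hp : perm_eq (Finite.enum T0) s.
  apply: uniq_perm; last by move=> x; rewrite Cs -enumT mem_enum.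
    by rewrite -enumT; apply: enum_uniq.
  exact: Us.
by move/permP: Hp.
Qed.

Lemma card_vs (A : {set T}) : #|A| = count (mem A) vs.
Proof. exact: card_perm vs_uniq vs_cover _. Qed.

Definition vs2 : seq (T * T) := [seq (x, y) | x <- vs, y <- vs].
Arguments vs2 : simpl never.

Lemma vs2_cover (pr : T * T) : pr \in vs2.
Proof. by case: pr => x y; apply: allpairs_f; apply: vs_cover. Qed.

Lemma vs2_uniq : uniq vs2. Proof. by vm_compute. Qed.

Lemma card_vs2 (A : {set T * T}) : #|A| = count (mem A) vs2.
Proof. exact: card_perm vs2_uniq vs2_cover _. Qed.

Fixpoint lists (n : nat) : seq (seq bool) :=
  if n is n'.+1 then [seq b :: l | b <- [:: true; false], l <- lists n'] else [:: [::]].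

Lemma lists_mem n (L : seq bool) : size L = n -> L \in lists n.
Proof.
elim: n L => [|n IH] [|b l] // [Hs].
apply: (@allpairs_f_dep _ _ _ (fun b l => b :: l)); first by case: b.
exact: IH.
Qed.

Definition Ei : seq (nat * nat) :=
  [seq (enc pr.1, enc pr.2) | pr <- vs2 & G pr.1 pr.2 && (enc pr.1 < enc pr.2)].
Definition tbli : seq (nat * seq nat) :=
  [seq (enc w, [seq enc u | u <- vs & G u w]) | w <- vs].
Definition Qi (Ei : seq (nat*nat)) (tbli : seq (nat * seq nat)) (L : seq bool) : bool :=
 let c := count id L in
 (0 < c) ==> (7 + (1 < c) <= count (fun ij => nth false L ij.1 && nth false L ij.2) Ei
   + (count (fun x => ~~ nth false L x.1 && has (nth false L) x.2) tbli + 1 - c)).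
Definition bigcheck : bool :=
  let Ei := Ei in let tbli := tbli in all (Qi Ei tbli) (lists 16).

Lemma bigcheck_ok : bigcheck. Proof. vm_compute. reflexivity. Qed.

Lemma enc_ok : all (fun t => (enc t < 16) && (nth (mk 0) vs (enc t) == t)) vs.
Proof. by vm_compute. Qed.

Lemma nth_enc t : nth (mk 0) vs (enc t) = t.
Proof. by have /allP/(_ t (vs_cover t))/andP[_ /eqP] := enc_ok. Qed.

Lemma enc_lt t : enc t < 16.
Proof. by have /allP/(_ t (vs_cover t))/andP[] := enc_ok. Qed.

Lemma lpE (p : pred T) t : nth false (map p vs) (enc t) = p t.
Proof. by rewrite (nth_map (mk 0)) ?nth_enc // size_map enc_lt. Qed.

Definition P2 (I : {set T}) : {set T * T} :=
  [set pr | [&& pr.1 \in I, pr.2 \in I, G pr.1 pr.2 & enc pr.1 < enc pr.2]].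
Definition Mn (I : {set T}) : {set T} :=
  [set w | (w \notin I) && [exists u in I, G u w]].

Lemma count_map_pair (A B C : Type) (P : B -> C -> bool) (f : A -> B) (g : A -> C) s :
  count (fun x => P x.1 x.2) (map (fun w => (f w, g w)) s) = count (fun w => P (f w) (g w)) s.
Proof. by elim: s => //= a s ->. Qed.

Lemma has_map_gen (A B : Type) (P : B -> bool) (f : A -> B) s :
  has P (map f s) = has (fun x => P (f x)) s.
Proof. by elim: s => //= a s ->. Qed.

Lemma count_filter_gen (A : Type) (P q : A -> bool) s :
  count P (filter q s) = count (fun x => P x && q x) s.
Proof. by elim: s => //= a s IH; case: (q a) => /=; rewrite IH ?andbT ?andbF. Qed.

Lemma fact (I : {set T}) :
  0 < #|I| -> 7 + (1 < #|I|) <= #|P2 I| + (#|Mn I| + 1 - #|I|).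
Proof.
pose p := fun x => x \in I.
have hp : forall x, p x = (x \in I) by [].
pose L := map p vs.
have HL : L \in lists 16 by apply: lists_mem; rewrite size_map.
have HQ := allP bigcheck_ok L HL.
have e1 : count id L = #|I| by rewrite count_map card_vs.
have hL : forall t, nth false L (enc t) = p t := lpE p.
clearbody L p.
have e2 : count (fun ij => nth false L ij.1 && nth false L ij.2) Ei = #|P2 I|.
  have e2a : count (fun ij => nth false L ij.1 && nth false L ij.2) Ei =
     count (fun pr => p pr.1 && p pr.2 && (G pr.1 pr.2 && (enc pr.1 < enc pr.2))) vs2.
    rewrite /Ei (count_map_pair (fun a b => nth false L a && nth false L b)) count_filter_gen.
    by apply: eq_count => pr; rewrite !hL.
  rewrite e2a card_vs2; apply: eq_count => -[x y].
  by rewrite [RHS]inE !hp -!andbA.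
have e3 : count (fun x => ~~ nth false L x.1 && has (nth false L) x.2) tbli = #|Mn I|.
  have e3a : count (fun x => ~~ nth false L x.1 && has (nth false L) x.2) tbli =
     count (fun w => ~~ p w && has p [seq u <- vs | G u w]) vs.
    rewrite /tbli (count_map_pair (fun a b => ~~ nth false L a && has (nth false L) b)).
    apply: eq_count => w.
    rewrite hL has_map_gen; congr (_ && _); apply: eq_has => u.
    by rewrite hL.
  rewrite e3a card_vs; apply: eq_count => w.
  rewrite [RHS]inE hp; congr (_ && _).
  apply/hasP/existsP => [[u]|[u /andP[uI Guw]]].
    by rewrite mem_filter hp => /andP[Guw _] uI; exists u; rewrite uI.
  by exists u; rewrite ?mem_filter ?Guw ?vs_cover // hp.
by move: HQ; rewrite /Qi e1 e2 e3 => /implyP.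
Qed.


Section Hall.
Variables (A B : finType) (b0 : B).
Definition nbr (r : A -> B -> bool) (X : {set A}) : {set B} :=
  [set y | [exists x in X, r x y]].

Lemma nbrU (r : A -> B -> bool) (X Y : {set A}) : nbr r (X :|: Y) = nbr r X :|: nbr r Y.
Proof.
apply/setP => y; rewrite !inE; apply/existsP/orP.
  by case=> x /andP[]; rewrite inE => /orP[] xX rxy; [left|right];
    apply/existsP; exists x; rewrite xX.
by case=> /existsP[x /andP[xX rxy]]; exists x; rewrite inE xX ?orbT rxy.
Qed.

Lemma nbr_mem (r : A -> B -> bool) (X : {set A}) x y : x \in X -> r x y -> y \in nbr r X.
Proof. by move=> xX rxy; rewrite inE; apply/existsP; exists x; rewrite xX. Qed.

Lemma hall_rec n : forall (r : A -> B -> bool) (D : {set A}), #|D| <= n ->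
  (forall X : {set A}, X \subset D -> #|X| <= #|nbr r X|) ->
  exists f : A -> B, (forall x, x \in D -> r x (f x)) /\ {in D &, injective f}.
Proof.
elim: n => [|n IH] r D HD Hall.
  have D0 : D = set0 by apply/eqP; rewrite -cards_eq0; lia.
  by exists (fun _ => b0); rewrite D0; split => [x|x y]; rewrite inE.
case: (leqP #|D| n) => [Hn|Hn]; first exact: IH.
case: (boolP [exists X : {set A}, [&& X \subset D, X != set0, X != D & #|nbr r X| <= #|X|]]).
  case/existsP=> X0 /and4P[sX0 X0n0 X0nD tight].
  have ltX0 : #|X0| < #|D| by rewrite proper_card // properEneq X0nD sX0.
  have X0pos : 0 < #|X0| by rewrite card_gt0.
  have [f1 [f1r f1i]] := IH r X0 (ltac:(lia)) (fun X sX => Hall X (subset_trans sX sX0)).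
  set NB := nbr r X0.
  have NBe : NB = nbr r X0 by [].
  clearbody NB.
  set r2 := fun x y => r x y && (y \notin NB).
  have Hall2 : forall X : {set A}, X \subset D :\: X0 -> #|X| <= #|nbr r2 X|.
    move=> X sX.
    have e : nbr r2 X = nbr r X :\: NB.
      apply/setP => y; rewrite !inE; apply/existsP/andP.
        case=> x /andP[xX /andP[rxy yN]]; split => //.
        by apply/existsP; exists x; rewrite xX.
      by case=> yN /existsP[x /andP[xX rxy]]; exists x; rewrite xX /r2 rxy yN.
    have dis : X :&: X0 = set0.
      apply/setP => x; rewrite !inE; apply/negP => /andP[xX xX0].
      by have := subsetP sX x xX; rewrite !inE xX0.
    have sXD : X :|: X0 \subset D.
      by rewrite subUset sX0 andbT; apply: subset_trans sX (subsetDl _ _).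
    have H1 := Hall _ sXD.
    rewrite nbrU -NBe in H1.
    have H2 := cardsU X X0; rewrite dis cards0 subn0 in H2.
    have H3 := cardsU (nbr r X) NB.
    have H4 := cardsD (nbr r X) NB.
    rewrite e H4.
    have H5 : #|nbr r X :&: NB| <= #|NB| by apply: subset_leq_card; apply: subsetIr.
    have H6 : #|nbr r X :&: NB| <= #|nbr r X| by apply: subset_leq_card; apply: subsetIl.
    have := tight; rewrite -NBe => tight2.
    lia.
  have HD2 : #|D :\: X0| <= n.
    by rewrite cardsD (setIidPr sX0); lia.
  have [f2 [f2r f2i]] := IH r2 (D :\: X0) HD2 Hall2.
  exists (fun x => if x \in X0 then f1 x else f2 x); split.
    move=> x xD; case: ifP => xX0; first exact: f1r.
    by have /andP[] := f2r x (ltac:(rewrite !inE xX0 xD //)).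
  move=> x y xD yD /=.
  have xD2 : forall z, z \in D -> z \notin X0 -> z \in D :\: X0 by move=> z ? ?; rewrite !inE; apply/andP.
  case: ifP => xX; case: ifP => yX.
  - exact: f1i.
  - move=> e; have := f2r y (xD2 y yD (negbT yX)); rewrite /r2 -e => /andP[_].
    by rewrite NBe (nbr_mem xX (f1r x xX)).
  - move=> e; have := f2r x (xD2 x xD (negbT xX)); rewrite /r2 e => /andP[_].
    by rewrite NBe (nbr_mem yX (f1r y yX)).
  - by apply: f2i; apply: xD2 => //; apply: negbT.
move=> Hnt.
have [x0 x0D] : exists x0, x0 \in D by apply/set0Pn; rewrite -card_gt0; lia.
have [y0 y0N] : exists y0, y0 \in nbr r [set x0].
  apply/set0Pn; rewrite -card_gt0.
  have := Hall [set x0]; rewrite sub1set x0D cards1; exact.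
have rx0y0 : r x0 y0.
  by move: y0N; rewrite inE => /existsP[x /andP[]]; rewrite inE => /eqP ->.
set r2 := fun x y => r x y && (y != y0).
have Hall2 : forall X : {set A}, X \subset D :\ x0 -> #|X| <= #|nbr r2 X|.
  move=> X sX.
  case: (eqVneq X set0) => [->|Xn0]; first by rewrite cards0.
  have sXD : X \subset D by apply: subset_trans sX (subsetDl _ _).
  have XnD : X != D.
    apply/negP => /eqP XD; have := subsetP sX x0; rewrite XD x0D !inE eqxx /=.
    by move/(_ isT).
  have H1 : #|X| < #|nbr r X|.
    have := negP (existsPn Hnt X); rewrite sXD Xn0 XnD /= => H.
    by rewrite ltnNge; apply/negP => H'; apply: H.
  have H2 : nbr r X :\ y0 \subset nbr r2 X.
    apply/subsetP => y; rewrite !inE => /andP[yy0 /existsP[x /andP[xX rxy]]].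
    by apply/existsP; exists x; rewrite xX /r2 rxy yy0.
  have H3 := cardsD1 y0 (nbr r X).
  have H4 := subset_leq_card H2.
  case: (y0 \in nbr r X) H3 => /= H3; lia.
have HD2 : #|D :\ x0| <= n by have := cardsD1 x0 D; rewrite x0D /=; lia.
have [f2 [f2r f2i]] := IH r2 (D :\ x0) HD2 Hall2.
exists (fun x => if x == x0 then y0 else f2 x); split.
  move=> x xD; case: eqP => [->|xx0] //.
  by have /andP[] := f2r x (ltac:(rewrite !inE xD andbT; apply/eqP => //)).
move=> x y xD yD /=.
have xD2 : forall z, z \in D -> z != x0 -> z \in D :\ x0 by move=> z ? ?; rewrite !inE; apply/andP.
case: eqP => [->|/eqP xx]; case: eqP => [->|/eqP yy] //.
- move=> e; have := f2r y (xD2 y yD yy); rewrite /r2 -e eqxx andbF //.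
- move=> e; have := f2r x (xD2 x xD xx); rewrite /r2 e eqxx andbF //.
- by apply: f2i; apply: xD2.
Qed.

Lemma hall (r : A -> B -> bool) (D : {set A}) :
  (forall X : {set A}, X \subset D -> #|X| <= #|nbr r X|) ->
  exists f : A -> B, (forall x, x \in D -> r x (f x)) /\ {in D &, injective f}.
Proof. exact: hall_rec. Qed.
End Hall.


Import Order.TTheory GRing.Theory Num.Theory.

Lemma Gsym (u w : T) : G u w = G w u.
Proof.
have H : all (fun u => all (fun w => G u w == G w u) vs) vs by vm_compute.
by have /allP/(_ u (vs_cover u))/allP/(_ w (vs_cover w))/eqP := H.
Qed.

Lemma Girr (u : T) : G u u = false.
Proof.
have H : all (fun u => ~~ G u u) vs by vm_compute.
by have /allP/(_ u (vs_cover u))/negbTE := H.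
Qed.

Lemma set2P (x y u w : T) : [set x; y] = [set u; w] -> (x = u /\ y = w) \/ (x = w /\ y = u).
Proof.
move=> E.
have hx : x \in [set u; w] by rewrite -E set21.
have hy : y \in [set u; w] by rewrite -E set22.
have hu : u \in [set x; y] by rewrite E set21.
have hw : w \in [set x; y] by rewrite E set22.
rewrite !inE in hx hy hu hw.
case/orP: hx => /eqP hx; case/orP: hy => /eqP hy; subst.
- by case/orP: hw => /eqP ->; left.
- by left.
- by right.
- by case/orP: hu => /eqP ->; right.
Qed.

Lemma edges_set2 (x y : T) : ([set x; y] \in edges G) = G x y.
Proof.
apply/idP/idP.
  rewrite inE => /existsP[u /existsP[w /andP[/eqP E Guw]]].
  by case: (set2P E) => -[-> ->] //; rewrite Gsym.
by move=> Gxy; rewrite inE; apply/existsP; exists x; apply/existsP; exists y; rewrite eqxx.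
Qed.

Lemma edgesP (A : {set T}) : A \in edges G -> exists u w, A = [set u; w] /\ G u w.
Proof. by rewrite inE => /existsP[u /existsP[w /andP[/eqP E Guw]]]; exists u, w. Qed.

Lemma rem_set2 (FV : {set T}) FE (x y : T) :
  ([set x; y] \in rem_edges G FV FE) =
  [&& G x y, [set x; y] \notin FE, x \notin FV & y \notin FV].
Proof.
rewrite /rem_edges inE edges_set2 disjoints_subset subUset !sub1set !inE.
by [].
Qed.

Lemma rem_edges_sub (FV : {set T}) FE A : A \in rem_edges G FV FE -> A \in edges G.
Proof. by rewrite /rem_edges inE => /andP[]. Qed.

Section FPM.
Variable R : realFieldType.
Variables (FV : {set T}) (FE : {set {set T}}).
Definition rr (x y : T) := [set x; y] \in rem_edges G FV FE.

Lemma fpm_of_hall :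
  (forall X : {set T}, X \subset rem_vertices FV -> #|X| <= #|nbr rr X|) ->
  has_fpm R (rem_vertices FV) (rem_edges G FV FE).
Proof.
set E' := rem_edges G FV FE.
set V' := rem_vertices FV.
move=> Hc.
have [s [sr si]] := hall (mk 0) Hc.
have rrV : forall x y, rr x y -> [/\ G x y, x \in V' & y \in V'].
  move=> x y; rewrite /rr rem_set2 /V' /rem_vertices !inE.
  by case/and4P=> Gx _ -> ->.
have sV : forall x, x \in V' -> [/\ G x (s x), s x \in V' & s x != x].
  move=> x xV; have [Gx _ sxV] := rrV _ _ (sr x xV); split => //.
  by apply/eqP => E; rewrite E Girr in Gx.
have sur : forall v, v \in V' -> exists2 w, w \in V' & s w = v.
  move=> v vV.
  have sub : s @: V' \subset V'.
    by apply/subsetP => y /imsetP[x xV ->]; have [] := sV x xV.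
  have ceq : #|s @: V'| = #|V'| by rewrite card_in_imset.
  have Heq := subset_cardP ceq sub.
  have : v \in s @: V' by rewrite Heq.
  by case/imsetP => w wV ->; exists w.
pose cnt (A : {set T}) := (\sum_(x in A) ((s x \in A) && (s x != x) : nat))%N.
have cnt2 : forall A, A \in edges G -> (cnt A <= 2)%N.
  move=> A /edgesP[u [w [-> _]]].
  apply: (@leq_trans #|[set u; w]|); last by rewrite cards2; case: (u != w).
  rewrite -sum1_card; apply: leq_sum => x _; by case: (_ && _).
exists (fun A => ((cnt A)%:R / 2%:R)%R); split.
  move=> A AE; have := cnt2 A (rem_edges_sub AE) => c2.
  apply/andP; split; first by rewrite divr_ge0 ?ler0n.
  by rewrite ler_pdivrMr ?ltr0n // mul1r ler_nat.
move=> v vV.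
rewrite -mulr_suml -natr_sum.
suff -> : (\sum_(A in E' | v \in A) cnt A)%N = 2%N by rewrite divff // pnatr_eq0.
pose W := [set w | rr v w].
have WV : forall w, w \in W -> w \in V' by move=> w; rewrite inE => /rrV[].
have e1 : (\sum_(A in E' | v \in A) cnt A = \sum_(A in (fun w => [set v; w]) @: W) cnt A)%N.
  apply: eq_bigl => A; apply/andP/imsetP.
    case=> AE vA; have [u [w [EA Guw]]] := edgesP (rem_edges_sub AE).
    move: vA; rewrite EA !inE => /orP[] /eqP Ev; subst v.
      by exists w; rewrite // inE /rr -EA.
    by exists u; rewrite ?inE /rr setUC -?EA // EA setUC.
  by case=> w; rewrite inE /rr => Hw ->; split; rewrite // set21.
rewrite e1 big_imset; last first.
  move=> w w' wW w'W /= E; case: (set2P E) => -[] //.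
  by move=> <- ->.
have e2 : forall w, w \in W -> cnt [set v; w] = ((s v == w) + (s w == v))%N.
  move=> w wW.
  have : rr v w by move: wW; rewrite inE.
  case/rrV => Gvw _ wV.
  have vw : v != w by apply/eqP => E; rewrite E Girr in Gvw.
  rewrite /cnt big_setU1 ?inE // big_set1 /=.
  have [_ _ svv] := sV v vV; have [_ _ sww] := sV w wV.
  rewrite !inE svv sww !andbT.
  case: (s v =P v) svv => // _ _; case: (s w =P w) sww => // _ _.
  by rewrite orbF.
rewrite (eq_bigr _ e2) big_split /=.
have [w0 w0V sw0] := sur v vV.
have svW : s v \in W by rewrite inE; exact: sr.
have w0W : w0 \in W by rewrite inE /rr setUC -sw0; exact: sr.
rewrite (bigD1 (s v)) //= eqxx [X in _ + X](bigD1 w0) //= sw0 eqxx.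
rewrite big1 => [|w /andP[_ wn]]; last by rewrite eq_sym (negbTE wn).
rewrite big1 => [//|w /andP[wW wn]].
case: eqP => // E; exfalso; move/negP: wn; apply; apply/eqP.
by apply: si; rewrite ?WV // E sw0.
Qed.
End FPM.

Section Main.
Variable R : realFieldType.

Lemma main_bound (FV : {set T}) (FE : {set {set T}}) :
  FE \subset edges G -> ~ has_fpm R (rem_vertices FV) (rem_edges G FV FE) ->
  exists I : {set T}, [/\ 0 < #|I|,
     #|P2 I| + (#|Mn I| + 1 - #|I|) <= #|FV| + #|FE| &
     (#|I| = 1 -> has_isolated G FV FE)].
Proof.
move=> valid nofpm.
set V' := rem_vertices FV.
have [X [XV Xlt]] : exists X : {set T}, X \subset V' /\ #|nbr (rr FV FE) X| < #|X|.
  case: (boolP [exists X : {set T}, (X \subset V') && (#|nbr (rr FV FE) X| < #|X|)]).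
    by case/existsP => X /andP[? ?]; exists X.
  move=> H; exfalso; apply: nofpm; apply: fpm_of_hall => X XV.
  by move/existsPn: H => /(_ X); rewrite XV /= -leqNgt.
set N := nbr (rr FV FE) X.
set I := X :\: N.
set S := N :\: X.
have SI : #|S| < #|I|.
  have h1 := cardsD X N; have h2 := cardsD N X.
  rewrite -/I -/S setIC in h1 h2.
  have h3 : #|N :&: X| <= #|N| by apply: subset_leq_card; apply: subsetIl.
  have h4 : #|N :&: X| <= #|X| by apply: subset_leq_card; apply: subsetIr.
  have h5 : #|N| < #|X| := Xlt.
  rewrite h1 h2; apply: ltn_sub2r => //; exact: leq_ltn_trans h3 h5.
have IX : forall u, u \in I -> u \in X /\ u \notin N.
  by move=> u; rewrite inE => /andP[].
have IV : forall u, u \in I -> u \notin FV.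
  by move=> u /IX[uX _]; have := subsetP XV u uX; rewrite inE.
have IS : forall u, u \in I -> u \notin S.
  by move=> u /IX[uX _]; rewrite inE uX.
have key : forall u w, u \in I -> G u w -> [|| w \in S, w \in FV | [set u; w] \in FE].
  move=> u w uI Guw.
  case wFV: (w \in FV); first by rewrite orbT.
  case wFE: ([set u; w] \in FE); first by rewrite !orbT.
  have [uX uN] := IX u uI.
  have ruw : rr FV FE u w by rewrite /rr rem_set2 Guw wFE IV ?wFV.
  have wN : w \in N by rewrite /N inE; apply/existsP; exists u; rewrite uX.
  rewrite inE wN andbT !orbF; apply/negP => wX.
  have rwu : rr FV FE w u by rewrite /rr setUC.
  by move/negP: uN; apply; rewrite /N inE; apply/existsP; exists w; rewrite wX.
pose W := [set w in Mn I | (w \notin S) && (w \notin FV)].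
pose nb w := odflt w [pick u in I | G u w].
have nbP : forall w, w \in Mn I -> nb w \in I /\ G (nb w) w.
  move=> w; rewrite inE => /andP[_ /existsP[u /andP[uI Guw]]]; rewrite /nb.
  case: pickP => [u' /andP[] //|/(_ u)]; by rewrite uI Guw.
pose g1 (pr : T * T) := [set pr.1; pr.2].
pose g2 (w : T) := [set w; nb w].
have s1 : g1 @: P2 I \subset FE.
  apply/subsetP => A /imsetP[[a b]]; rewrite inE /= => /and4P[aI bI Gab _] ->.
  by have := key a b aI Gab; rewrite (negbTE (IS b bI)) (negbTE (IV b bI)).
have s2 : g2 @: W \subset FE.
  apply/subsetP => A /imsetP[w]; rewrite inE => /andP[wM /andP[wS wF]] ->.
  have [uI Guw] := nbP w wM.
  by have := key _ _ uI Guw; rewrite (negbTE wS) (negbTE wF) /= /g2 setUC.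
have dis : g1 @: P2 I :&: g2 @: W = set0.
  apply/setP => A; rewrite !inE; apply/negP => /andP[/imsetP[[a b] + ->] /imsetP[w + E]].
  rewrite !inE /= => /and4P[aI bI _ _] /andP[wM _].
  have : w \in g1 (a, b) by rewrite E /g2 set21.
  move: wM; rewrite inE => /andP[wI _].
  by rewrite /g1 /= !inE => /orP[] /eqP Ew; move: wI; rewrite Ew ?aI ?bI.
have inj1 : {in P2 I &, injective g1}.
  move=> [a b] [c d]; rewrite !inE /= => /and4P[_ _ _ ab] /and4P[_ _ _ cd] E.
  case: (set2P E) => -[/= E1 E2]; subst => //.
  by move: ab cd; lia.
have inj2 : {in W &, injective g2}.
  move=> w w' /setIdP[wM _] /setIdP[w'M _] E.
  case: (set2P E) => -[E1 E2] //.
  have [w'I _] := nbP w' w'M.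
  by move: wM; rewrite inE E1 w'I.
have cFE : #|P2 I| + #|W| <= #|FE|.
  have := subset_leq_card (ltac:(by rewrite subUset s1 s2) : g1 @: P2 I :|: g2 @: W \subset FE).
  by rewrite cardsU dis cards0 subn0 !card_in_imset.
have cM : #|Mn I| <= #|W| + #|S| + #|FV|.
  have sub : Mn I \subset (W :|: S) :|: FV.
    apply/subsetP => w wM; rewrite !in_setU [w \in W]inE wM /=.
    by case: (w \in S); case: (w \in FV).
  have h0 := subset_leq_card sub.
  move: (leq_card_setU (W :|: S) FV) (leq_card_setU W S) => [h1 _] [h2 _].
  apply: leq_trans h0 _; apply: leq_trans h1 _; by rewrite leq_add2r.
have I0 : 0 < #|I| by lia.
exists I; split => //; first lia.
move=> /eqP /cards1P[v Iv].
have S0 : S = set0 by apply: cards0_eq; rewrite Iv cards1 in SI; lia.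
have vI : v \in I by rewrite Iv set11.
exists v; split; first by rewrite /rem_vertices inE IV.
move=> A AR; apply/negP => vA.
have [a [b [EA Gab]]] := edgesP (rem_edges_sub AR).
have [w [EA' Gvw]] : exists w, A = [set v; w] /\ G v w.
  move: vA; rewrite EA !inE => /orP[] /eqP ->; first by exists b.
  by exists a; rewrite setUC Gsym.
move: AR; rewrite EA' rem_set2 => /and4P[_ nFE _ nFV].
have := key v w vI Gvw; rewrite S0 inE (negbTE nFE) (negbTE nFV).
done.
Qed.

End Main.

Lemma FV0_card : #|[set w | G (mk 0) w]| = 7.
Proof.
rewrite card_vs (@eq_count _ _ (fun w => G (mk 0) w)); first by vm_compute.
move=> w. by change ((w \in [set w | G (mk 0) w]) = G (mk 0) w); rewrite inE.
Qed.

Lemma no_fpm0 (R : realFieldType) :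
  ~ has_fpm R (rem_vertices [set w | G (mk 0) w]) (rem_edges G [set w | G (mk 0) w] set0).
Proof.
move=> [f [_ Hs]].
have v0V : mk 0 \in rem_vertices [set w | G (mk 0) w] by rewrite /rem_vertices !inE Girr.
have := Hs _ v0V.
rewrite big_pred0 => [/eqP|A]; first by rewrite eq_sym oner_eq0.
apply/negP => /andP[AR vA].
have [a [b [EA Gab]]] := edgesP (rem_edges_sub AR).
have [w [EA' Gvw]] : exists w, A = [set mk 0; w] /\ G (mk 0) w.
  move: vA; rewrite EA !inE => /orP[] /eqP E.
    by exists b; rewrite E.
  by exists a; rewrite E; split; [apply: setUC | rewrite Gsym].
by move: AR; rewrite EA' rem_set2 => /and4P[_ _ _]; rewrite inE Gvw.
Qed.

Lemma aux_eq1 (k : nat) : 0 < k -> 7 + (1 < k) <= 7 -> k = 1.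
Proof. by case: k => [|[|k]]. Qed.

Theorem lemma4p1 (R : realFieldType) :
  fsmp_is (@AQ 4) R 7 /\
  (forall (FV : {set 4.-tuple bool}) (FE : {set {set 4.-tuple bool}}),
      is_fsmp_set (@AQ 4) R FV FE -> fault_size FV FE = 7 ->
      has_isolated (@AQ 4) FV FE).
Proof.
split; first split.
- exists [set w | G (mk 0) w], set0; split; last by rewrite /fault_size FV0_card cards0.
  split; first by rewrite /valid_fault sub0set.
  exact: no_fpm0.
- move=> FV FE [valid nofpm].
  have [I [I0 Hb _]] := main_bound valid nofpm.
  have := fact I0 => h; rewrite /fault_size; apply: leq_trans (leq_trans _ h) Hb; exact: leq_addr.
- move=> FV FE [valid nofpm] Hs.
  have [I [I0 Hb Hiso]] := main_bound valid nofpm.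
  apply: Hiso; have h := leq_trans (fact I0) Hb; move: Hs h; rewrite /fault_size => ->.
  exact: aux_eq1.
Qed.
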